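(* A locally compact Hausdorff space $X$ has the universal fixed point property if and only if it has the fixed point property with respect to the space $C(X,X)$.
   Context: $C(X,X)$ is the set of continuous self-maps of $X$ with the compact-open topology (generated by the sets $\{g\mid g(K)\subseteq U\}$, $K\subseteq X$ compact, $U\subseteq X$ open). A space $X$ has the fixed point property with respect to a topological space $T$ if for every continuous map $f\colon T\times X\to X$ there exists a continuous map $p\colon T\to X$ with $f(t,p(t))=p(t)$ for all $t\in T$. It has the universal fixed point property if it has the fixed point property with respect to every topological space $T$. *)

(* Defs.v *)
From HB Require Import structures.
From mathcomp Require Import all_boot all_order all_algebra.
From mathcomp Require Import all_classical all_reals all_analysis.
Set Implicit Arguments. Unset Strict Implicit. Unset Printing Implicit Defensive.
Local Open Scope classical_set_scope.

(* C(X,X): continuous self-maps of X, with the compact-open topology,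
   i.e. the subspace (initial) topology induced by the inclusion into
   mathcomp-analysis' compact-open topology {compact-open, X -> X} on all maps
   (generated by the sets {g | g(K) ⊆ U}, K compact, U open). *)
Definition CXX (X : topologicalType) : Type := {f : X -> X | continuous f}.

HB.instance Definition _ (X : topologicalType) := gen_eqMixin (CXX X).
HB.instance Definition _ (X : topologicalType) := gen_choiceMixin (CXX X).
HB.instance Definition _ (X : topologicalType) :=
  Topological.copy (CXX X)
    (@initial_topology (CXX X) {compact-open, X -> X}
       (fun f : CXX X => (proj1_sig f : {compact-open, X -> X}))).

Definition fpp_wrt (T X : topologicalType) : Prop :=
  forall f : T * X -> X, continuous f ->
    exists p : T -> X, continuous p /\ forall t : T, f (t, p t) = p t.

Definition universal_fpp (X : topologicalType) : Prop :=
  forall T : topologicalType, fpp_wrt T X.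

(* Main.v *)
Require Import Defs.
From HB Require Import structures.
From mathcomp Require Import all_boot all_order all_algebra.
From mathcomp Require Import all_classical all_reals all_analysis.
Local Open Scope classical_set_scope.

Section Aux.
Import ArrowAsCompactOpen.

Lemma cxx_eval_cont (X : topologicalType) :
  hausdorff_space X -> locally_compact [set: X] ->
  continuous (fun z : CXX X * X => proj1_sig z.1 z.2).
Proof.
move=> hX lX.
have := @continuous_uncurry (CXX X) X X (fun h : CXX X => (proj1_sig h : X -> X)) lX hX.
move=> H; have {}H := H _ (fun u => proj2_sig u).
have /H : continuous (fun h : CXX X => (proj1_sig h : X -> X)).
  exact: (@initial_continuous (CXX X) {compact-open, X -> X} (fun f : CXX X => (proj1_sig f : {compact-open, X -> X}))).
move=> C.
have -> : (fun z : CXX X * X => proj1_sig z.1 z.2) = uncurry (fun h : CXX X => (proj1_sig h : X -> X)).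
  by apply: funext => -[].
exact: C.
Qed.

Lemma cxx_curry_cont (T X : topologicalType) (f : T * X -> X)
  (cf : continuous f) :
  continuous (fun t : T => exist _ (curry f t) ((continuous_curry cf).2 t) : CXX X).
Proof.
apply: (@continuous_comp_initial (CXX X) T {compact-open, X -> X}
  (fun f : CXX X => (proj1_sig f : {compact-open, X -> X}))).
exact: (continuous_curry cf).1.
Qed.
End Aux.

Theorem corollary7p4 (X : topologicalType) :
  hausdorff_space X -> locally_compact [set: X] ->
  (universal_fpp X <-> fpp_wrt (CXX X) X).
Proof.
move=> hX lX; split; first by move=> U; exact: U.
move=> H T f cf.
have [p [cp fp]] := H _ (@cxx_eval_cont X hX lX).
exists (p \o (fun t : T => exist _ (curry f t) ((continuous_curry cf).2 t) : CXX X)).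
split.
  move=> t; apply: continuous_comp; first exact: cxx_curry_cont.
  exact: cp.
by move=> t /=; rewrite -[RHS]fp.
Qed.
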